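(* Let $\gamma$ and $\gamma'$ be two circular curves that are mutually monotone. Then $\gamma$ and $\gamma'$ have $O(m+m')$ proper intersection points, where $m=\lVert\gamma\rVert$ and $m'=\lVert\gamma'\rVert$.
   Context: A circular curve is a curve in $\mathbb{R}^2$ homeomorphic to a closed interval that is the union of finitely many circular arcs (connected portions of circles, segments included) meeting only at endpoints; its complexity $\lVert\cdot\rVert$ is the number of its arcs plus vertices. A curve $\gamma$ is $\vec v$-monotone for $\vec v\in\mathbb{S}^1$ if there is a homeomorphism $f:[0,1]\to\gamma$ with $\langle\vec v,f(a)\rangle<\langle\vec v,f(b)\rangle$ whenever $a<b$; $\gamma,\gamma'$ are mutually monotone if some $\vec v\in\mathbb{S}^1$ makes both $\vec v$-monotone. A point $p$ is a proper intersection point of $\gamma$ and $\gamma'$ if $p\in\gamma\cap\gamma'$ and $p$ is isolated in $\gamma\cap\gamma'$. *)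

(* Defs.v *)
From Stdlib Require Import Reals Lra List.
Import ListNotations.
Open Scope R_scope.

Definition point := (R * R)%type.
Definition pset := point -> Prop.

Definition dist (p q : point) : R :=
  sqrt ((fst p - fst q) ^ 2 + (snd p - snd q) ^ 2).
Definition inner (v p : point) : R := fst v * fst p + snd v * snd p.

Definition point_eq_dec (p q : point) : {p = q} + {p <> q}.
Proof.
  destruct p as [a b], q as [c d].
  destruct (Req_EM_T a c) as [H1|H1]; destruct (Req_EM_T b d) as [H2|H2].
  - left; subst; reflexivity.
  - right; intros H; inversion H; contradiction.
  - right; intros H; inversion H; contradiction.
  - right; intros H; inversion H; contradiction.
Defined.

Definition unit_interval (a : R) : Prop := 0 <= a <= 1.

Definition homeo_unit_interval (f : R -> point) (S : pset) : Prop :=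
  (forall a, unit_interval a -> forall eps, 0 < eps -> exists delta, 0 < delta /\
     forall b, unit_interval b -> Rabs (a - b) < delta -> dist (f a) (f b) < eps) /\
  (forall a b, unit_interval a -> unit_interval b -> f a = f b -> a = b) /\
  (forall p, S p <-> exists a, unit_interval a /\ f a = p) /\
  (* continuity of the inverse map S -> [0,1] *)
  (forall a, unit_interval a -> forall eps, 0 < eps -> exists delta, 0 < delta /\
     forall b, unit_interval b -> dist (f a) (f b) < delta -> Rabs (a - b) < eps).

Definition homeomorphic_to_interval (S : pset) : Prop :=
  exists f : R -> point, homeo_unit_interval f S.

(* Circular arcs: nondegenerate segments, or proper arcs of circles of
   positive radius (angles t0 < t1 < t0 + 2 PI). *)
Inductive arc : Type :=
  | Seg (p q : point)
  | Circ (c : point) (r t0 t1 : R).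

Definition arc_valid (a : arc) : Prop :=
  match a with
  | Seg p q => p <> q
  | Circ _ r t0 t1 => 0 < r /\ t0 < t1 /\ t1 < t0 + 2 * PI
  end.

Definition arc_pts (a : arc) : pset :=
  match a with
  | Seg p q => fun x => exists t, 0 <= t <= 1 /\
      x = ((1 - t) * fst p + t * fst q, (1 - t) * snd p + t * snd q)
  | Circ c r t0 t1 => fun x => exists t, t0 <= t <= t1 /\
      x = (fst c + r * cos t, snd c + r * sin t)
  end.

Definition arc_src (a : arc) : point :=
  match a with
  | Seg p _ => p
  | Circ c r t0 _ => (fst c + r * cos t0, snd c + r * sin t0)
  end.

Definition arc_tgt (a : arc) : point :=
  match a with
  | Seg _ q => q
  | Circ c r _ t1 => (fst c + r * cos t1, snd c + r * sin t1)
  end.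

Definition is_endpoint (a : arc) (x : point) : Prop := x = arc_src a \/ x = arc_tgt a.

Definition dummy_arc : arc := Seg (0, 0) (0, 0).

Definition circular_curve (gamma : pset) (l : list arc) : Prop :=
  homeomorphic_to_interval gamma /\
  (forall a, In a l -> arc_valid a) /\
  (forall x, gamma x <-> exists a, In a l /\ arc_pts a x) /\
  (forall i j, (i < j)%nat -> (j < length l)%nat -> forall x,
     arc_pts (nth i l dummy_arc) x -> arc_pts (nth j l dummy_arc) x ->
     is_endpoint (nth i l dummy_arc) x /\ is_endpoint (nth j l dummy_arc) x).

(* complexity: number of arcs plus number of (distinct) vertices *)
Definition endpoints (l : list arc) : list point :=
  flat_map (fun a => [arc_src a; arc_tgt a]) l.

Definition complexity (l : list arc) : nat :=
  (length l + length (nodup point_eq_dec (endpoints l)))%nat.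

Definition in_S1 (v : point) : Prop := fst v ^ 2 + snd v ^ 2 = 1.

Definition monotone_in_dir (v : point) (gamma : pset) : Prop :=
  exists f : R -> point, homeo_unit_interval f gamma /\
    forall a b, unit_interval a -> unit_interval b -> a < b ->
      inner v (f a) < inner v (f b).

Definition mutually_monotone (gamma gamma' : pset) : Prop :=
  exists v, in_S1 v /\ monotone_in_dir v gamma /\ monotone_in_dir v gamma'.

Definition proper_intersection (gamma gamma' : pset) (p : point) : Prop :=
  gamma p /\ gamma' p /\
  exists eps, 0 < eps /\
    forall q, gamma q -> gamma' q -> dist p q < eps -> q = p.

(* Main.v *)
Require Import Defs.
From Stdlib Require Import Reals List.
From Stdlib Require Import Lra Lia Psatz Classical ClassicalEpsilon Arith.
Import ListNotations.
Open Scope R_scope.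


Lemma IVT_gen' (f : R -> R) (a b y : R) :
  continuity f -> a <= b -> Rmin (f a) (f b) <= y <= Rmax (f a) (f b) ->
  exists z, a <= z <= b /\ f z = y.
Proof.
  intros Hc Hab Hy.
  unfold Rmin, Rmax in Hy.
  destruct (Req_dec (f a) y) as [E|E]; [exists a; split; [lra|auto]|].
  destruct (Req_dec (f b) y) as [E'|E']; [exists b; split; [lra|auto]|].
  destruct (Rle_dec (f a) (f b)) as [H|H].
  - assert (a < b). { destruct Hab as [|Hab]; auto. subst; lra. }
    destruct (IVT (fun t => f t - y) a b) as [z [Hz1 Hz2]].
    + apply continuity_minus; auto. apply continuity_const. intros ? ?; auto.
    + auto.
    + simpl; lra.
    + simpl; lra.
    + exists z; split; auto; lra.
  - assert (a < b). { destruct Hab as [|Hab]; auto. subst; lra. }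
    destruct (IVT (fun t => y - f t) a b) as [z [Hz1 Hz2]].
    + apply continuity_minus; auto. apply continuity_const. intros ? ?; auto.
    + auto.
    + simpl; lra.
    + simpl; lra.
    + exists z; split; auto; lra.
Qed.

Definition arc_lo (a : arc) : R := match a with Seg _ _ => 0 | Circ _ _ t0 _ => t0 end.
Definition arc_hi (a : arc) : R := match a with Seg _ _ => 1 | Circ _ _ _ t1 => t1 end.
Definition arc_P (a : arc) (t : R) : point :=
  match a with
  | Seg p q => ((1 - t) * fst p + t * fst q, (1 - t) * snd p + t * snd q)
  | Circ c r _ _ => (fst c + r * cos t, snd c + r * sin t)
  end.

Lemma arc_pts_P a z : arc_pts a z <-> exists t, arc_lo a <= t <= arc_hi a /\ z = arc_P a t.
Proof. destruct a; simpl; tauto. Qed.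

Lemma arc_src_P a : arc_src a = arc_P a (arc_lo a).
Proof. destruct a as [p q|c r t0 t1]; simpl; auto. destruct p; simpl; f_equal; ring. Qed.

Lemma arc_tgt_P a : arc_tgt a = arc_P a (arc_hi a).
Proof. destruct a as [p q|c r t0 t1]; simpl; auto. destruct q; simpl; f_equal; ring. Qed.

Lemma arc_lo_hi a : arc_valid a -> arc_lo a < arc_hi a.
Proof. destruct a; simpl; intros; lra. Qed.

Lemma arc_cont v a : continuity (fun t => inner v (arc_P a t)).
Proof.
  destruct a as [p q|c r t0 t1]; unfold inner; simpl.
  - reg.
  - reg.
Qed.

Lemma sin2c x : sin x ^ 2 + cos x ^ 2 = 1.
Proof. pose proof (sin2_cos2 x). unfold Rsqr in H. lra. Qed.

Lemma circ_inj t t' : t < t' -> t' < t + 2 * PI -> cos t = cos t' -> sin t = sin t' -> False.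
Proof.
  intros H1 H2 Hc Hs.
  assert (E : cos (t' - t) = 1).
  { rewrite cos_minus, <- Hc, <- Hs. pose proof (sin2c t). lra. }
  assert (E2 : cos (2 * ((t' - t) / 2)) = 1) by (replace (2 * ((t' - t) / 2)) with (t' - t) by field; auto).
  rewrite cos_2a_sin in E2.
  assert (0 < sin ((t' - t) / 2)) by (apply sin_gt_0; lra).
  nra.
Qed.

Lemma arc_P_inj a s t : arc_valid a -> arc_lo a <= s <= arc_hi a -> arc_lo a <= t <= arc_hi a ->
  arc_P a s = arc_P a t -> s = t.
Proof.
  destruct a as [p q|c r t0 t1]; simpl; intros Hv Hs Ht E; injection E; intros E2 E1.
  - destruct p as [p1 p2], q as [q1 q2]; simpl in *.
    destruct (Req_dec s t) as [|Hne]; auto. exfalso; apply Hv.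
    assert (Hd : s - t <> 0) by lra.
    f_equal.
    + apply Rmult_eq_reg_l with (s - t); auto. nra.
    + apply Rmult_eq_reg_l with (s - t); auto. nra.
  - destruct Hv as [Hr [H1 H2]].
    assert (Hc : cos s = cos t) by (apply Rmult_eq_reg_l with r; lra).
    assert (Hsn : sin s = sin t) by (apply Rmult_eq_reg_l with r; lra).
    destruct (Rtotal_order s t) as [Hl|[Hl|Hl]]; auto; exfalso.
    + apply (circ_inj s t); auto; lra.
    + apply (circ_inj t s); auto; lra.
Qed.

Definition absc_inj (v : point) (g : pset) : Prop :=
  forall p q, g p -> g q -> inner v p = inner v q -> p = q.

Lemma mono_inj v g : monotone_in_dir v g -> absc_inj v g.
Proof.
  intros [f [[_ [_ [Him _]]] Hm]] p q Hp Hq E.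
  apply Him in Hp as [a [Ha Hfa]]. apply Him in Hq as [b [Hb Hfb]]. subst.
  destruct (Rtotal_order a b) as [H|[H|H]].
  - specialize (Hm a b Ha Hb H). lra.
  - subst; auto.
  - specialize (Hm b a Hb Ha H). lra.
Qed.

Definition lo_of v a := Rmin (inner v (arc_src a)) (inner v (arc_tgt a)).
Definition hi_of v a := Rmax (inner v (arc_src a)) (inner v (arc_tgt a)).

Lemma no_bump v g a t y : absc_inj v g -> arc_valid a -> (forall z, arc_pts a z -> g z) ->
  arc_lo a <= t <= arc_hi a ->
  Rmin (inner v (arc_P a (arc_lo a))) (inner v (arc_P a t)) < y < Rmax (inner v (arc_P a (arc_lo a))) (inner v (arc_P a t)) ->
  Rmin (inner v (arc_P a t)) (inner v (arc_P a (arc_hi a))) < y < Rmax (inner v (arc_P a t)) (inner v (arc_P a (arc_hi a))) ->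
  False.
Proof.
  intros Hi Hv Hg Ht H1 H2.
  set (h := fun s => inner v (arc_P a s)).
  destruct (IVT_gen' h (arc_lo a) t y (arc_cont v a)) as [t1 [Ht1 E1]]; [lra|unfold h; lra|].
  destruct (IVT_gen' h t (arc_hi a) y (arc_cont v a)) as [t2 [Ht2 E2]]; [lra|unfold h; lra|].
  assert (t1 <> t). { intros ->. unfold h in E1. unfold Rmin, Rmax in H1; destruct Rle_dec; lra. }
  assert (t2 <> t). { intros ->. unfold h in E2. unfold Rmin, Rmax in H1; destruct Rle_dec; lra. }
  assert (E : arc_P a t1 = arc_P a t2).
  { apply Hi; try (apply Hg; apply arc_pts_P; eexists; split; [|reflexivity]; lra).
    unfold h in *; lra. }
  apply arc_P_inj in E; auto; lra.
Qed.

Lemma between v g a z : absc_inj v g -> arc_valid a -> (forall z, arc_pts a z -> g z) ->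
  arc_pts a z -> lo_of v a <= inner v z <= hi_of v a.
Proof.
  intros Hi Hv Hg Hz.
  apply arc_pts_P in Hz as [t [Ht ->]].
  unfold lo_of, hi_of. rewrite arc_src_P, arc_tgt_P.
  set (A := inner v (arc_P a (arc_lo a))) in *.
  set (B := inner v (arc_P a (arc_hi a))) in *.
  set (X := inner v (arc_P a t)).
  destruct (Rle_dec (Rmin A B) X); destruct (Rle_dec X (Rmax A B)); try (split; lra); exfalso.
  - apply (no_bump v g a t ((Rmax A B + X) / 2)); auto; fold A B X;
    unfold Rmin, Rmax in *; repeat destruct Rle_dec; lra.
  - apply (no_bump v g a t ((Rmin A B + X) / 2)); auto; fold A B X;
    unfold Rmin, Rmax in *; repeat destruct Rle_dec; lra.
  - unfold Rmin, Rmax in *; repeat destruct Rle_dec; lra.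
Qed.

Lemma arc_ivt v a y : arc_valid a -> lo_of v a <= y <= hi_of v a ->
  exists z, arc_pts a z /\ inner v z = y.
Proof.
  intros Hv Hy. unfold lo_of, hi_of in Hy; rewrite arc_src_P, arc_tgt_P in Hy.
  destruct (IVT_gen' (fun s => inner v (arc_P a s)) (arc_lo a) (arc_hi a) y (arc_cont v a)) as [t [Ht E]].
  - apply arc_lo_hi in Hv; lra.
  - auto.
  - exists (arc_P a t); split; auto. apply arc_pts_P; eauto.
Qed.

Lemma same_partner v g l j1 j2 y : absc_inj v g -> circular_curve g l ->
  (j1 < length l)%nat -> (j2 < length l)%nat ->
  lo_of v (nth j1 l dummy_arc) < y < hi_of v (nth j1 l dummy_arc) ->
  lo_of v (nth j2 l dummy_arc) < y < hi_of v (nth j2 l dummy_arc) -> j1 = j2.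
Proof.
  intros Hi [_ [Hval [Hg Hmeet]]] H1 H2 Y1 Y2.
  assert (V1 := Hval _ (nth_In l dummy_arc H1)). assert (V2 := Hval _ (nth_In l dummy_arc H2)).
  destruct (arc_ivt v _ y V1) as [z1 [Z1 E1]]; [lra|].
  destruct (arc_ivt v _ y V2) as [z2 [Z2 E2]]; [lra|].
  assert (z1 = z2).
  { apply Hi.
    - apply Hg. exists (nth j1 l dummy_arc). split; auto. apply nth_In; auto.
    - apply Hg. exists (nth j2 l dummy_arc). split; auto. apply nth_In; auto.
    - lra. }
  subst z2.
  destruct (Nat.lt_total j1 j2) as [L|[L|L]]; auto; exfalso.
  - destruct (Hmeet j1 j2 L H2 z1 Z1 Z2) as [[E|E] _]; rewrite E in E1;
    unfold lo_of, hi_of, Rmin, Rmax in Y1; destruct Rle_dec; lra.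
  - destruct (Hmeet j2 j1 L H1 z1 Z2 Z1) as [[E|E] _]; rewrite E in E2;
    unfold lo_of, hi_of, Rmin, Rmax in Y2; destruct Rle_dec; lra.
Qed.

Lemma pos3 a b c : 0 < a -> 0 < b -> 0 < c -> exists u, 0 < u /\ u <= a /\ u <= b /\ u <= c.
Proof.
  intros. exists (Rmin a (Rmin b c)). unfold Rmin; repeat destruct Rle_dec; repeat split; lra.
Qed.

Lemma dist_lt p q e : 0 < e -> (fst p - fst q)^2 + (snd p - snd q)^2 < e^2 -> Defs.dist p q < e.
Proof.
  intros He H. unfold Defs.dist. rewrite <- (sqrt_pow2 e) by lra. apply sqrt_lt_1; [pose proof (pow2_ge_0 (fst p - fst q)); pose proof (pow2_ge_0 (snd p - snd q)); lra|apply pow2_ge_0|lra].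
Qed.

Lemma line_circle (z1 z2 z3 c : point) R2 d1 d2 t2 t3 :
  z1 <> z2 -> z1 <> z3 -> z2 <> z3 ->
  (fst z1 - fst c)^2 + (snd z1 - snd c)^2 = R2 ->
  (fst z2 - fst c)^2 + (snd z2 - snd c)^2 = R2 ->
  (fst z3 - fst c)^2 + (snd z3 - snd c)^2 = R2 ->
  0 < d1^2 + d2^2 ->
  fst z2 = fst z1 + t2 * d1 -> snd z2 = snd z1 + t2 * d2 ->
  fst z3 = fst z1 + t3 * d1 -> snd z3 = snd z1 + t3 * d2 -> False.
Proof.
  destruct z1 as [a1 a2], z2 as [b1 b2], z3 as [e1 e2], c as [c1 c2]; cbn [fst snd].
  intros N12 N13 N23 E1 E2 E3 Hd F2 S2 F3 S3. subst b1 b2 e1 e2.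
  assert (t2 <> 0). { intros ->. apply N12; f_equal; ring. }
  assert (t3 <> 0). { intros ->. apply N13; f_equal; ring. }
  assert (t2 <> t3). { intros ->. apply N23; f_equal; ring. }
  set (N := d1^2 + d2^2) in *.
  set (B := (a1 - c1) * d1 + (a2 - c2) * d2).
  assert (Q2 : t2 * (N * t2 + 2 * B) = ((a1 + t2*d1 - c1)^2 + (a2+t2*d2-c2)^2) - ((a1-c1)^2+(a2-c2)^2)) by (unfold N, B; ring).
  assert (Q3 : t3 * (N * t3 + 2 * B) = ((a1 + t3*d1 - c1)^2 + (a2+t3*d2-c2)^2) - ((a1-c1)^2+(a2-c2)^2)) by (unfold N, B; ring).
  rewrite E1, E2, Rminus_diag_eq in Q2 by reflexivity.
  rewrite E1, E3, Rminus_diag_eq in Q3 by reflexivity.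
  apply Rmult_integral in Q2 as [|Q2]; [contradiction|].
  apply Rmult_integral in Q3 as [|Q3]; [contradiction|].
  assert (N * (t2 - t3) = 0) by lra.
  apply Rmult_integral in H2 as [|]; lra.
Qed.

Lemma circ_eq (c : point) r t0 t1 z : arc_pts (Circ c r t0 t1) z ->
  (fst z - fst c)^2 + (snd z - snd c)^2 = r^2.
Proof.
  intros H; simpl in H; destruct H as [t [_ ->]]; cbn [fst snd].
  replace ((fst c + r * cos t - fst c) ^ 2 + (snd c + r * sin t - snd c) ^ 2) with (r^2 * (sin t ^ 2 + cos t ^ 2)) by ring.
  rewrite sin2c; ring.
Qed.

Lemma seg_eq p q z : arc_pts (Seg p q) z -> exists t, 0 <= t <= 1 /\
  fst z = fst p + t * (fst q - fst p) /\ snd z = snd p + t * (snd q - snd p).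
Proof. simpl. intros [t [Ht ->]]; exists t; simpl; repeat split; try lra; ring. Qed.

Lemma seg_nz (p q : point) : p <> q -> 0 < (fst q - fst p)^2 + (snd q - snd p)^2.
Proof.
  destruct p as [p1 p2], q as [q1 q2]; simpl; intros H.
  destruct (Req_dec p1 q1); destruct (Req_dec p2 q2); subst; try nra.
  exfalso; auto.
Qed.

Lemma seg_circ p q c r t0 t1 z1 z2 z3 : p <> q ->
  z1 <> z2 -> z1 <> z3 -> z2 <> z3 ->
  arc_pts (Seg p q) z1 -> arc_pts (Seg p q) z2 -> arc_pts (Seg p q) z3 ->
  arc_pts (Circ c r t0 t1) z1 -> arc_pts (Circ c r t0 t1) z2 -> arc_pts (Circ c r t0 t1) z3 -> False.
Proof.
  intros Hpq N12 N13 N23 S1 S2 S3 C1 C2 C3.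
  apply seg_eq in S1 as [s1 [_ [A1 B1]]]. apply seg_eq in S2 as [s2 [_ [A2 B2]]].
  apply seg_eq in S3 as [s3 [_ [A3 B3]]].
  apply (line_circle z1 z2 z3 c (r^2) (fst q - fst p) (snd q - snd p) (s2 - s1) (s3 - s1));
    auto; try (eapply circ_eq; eassumption); try (apply seg_nz; auto); lra.
Qed.

Lemma perp_dec w1 w2 n1 n2 : w1*n1 + w2*n2 = 0 -> 0 < n1^2+n2^2 ->
  w1 = ((-w1*n2 + w2*n1)/(n1^2+n2^2)) * (-n2) /\ w2 = ((-w1*n2 + w2*n1)/(n1^2+n2^2)) * n1.
Proof.
  intros H N.
  assert (H1 : n1 * (w1*n1+w2*n2) = 0) by (rewrite H; ring).
  assert (H2 : n2 * (w1*n1+w2*n2) = 0) by (rewrite H; ring).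
  split; field_simplify_eq; try lra.
Qed.

Lemma circ_circ c r t0 t1 c' r' t0' t1' z1 z2 z3 : c <> c' ->
  z1 <> z2 -> z1 <> z3 -> z2 <> z3 ->
  arc_pts (Circ c r t0 t1) z1 -> arc_pts (Circ c r t0 t1) z2 -> arc_pts (Circ c r t0 t1) z3 ->
  arc_pts (Circ c' r' t0' t1') z1 -> arc_pts (Circ c' r' t0' t1') z2 -> arc_pts (Circ c' r' t0' t1') z3 -> False.
Proof.
  intros Hcc N12 N13 N23 C1 C2 C3 D1 D2 D3.
  apply circ_eq in C1, C2, C3, D1, D2, D3.
  set (n1 := fst c' - fst c). set (n2 := snd c' - snd c).
  assert (Hn : 0 < n1^2 + n2^2) by (apply seg_nz; auto).
  assert (P2 : (fst z2 - fst z1) * n1 + (snd z2 - snd z1) * n2 = 0).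
  { assert (K : 2 * ((fst z2 - fst z1) * n1 + (snd z2 - snd z1) * n2) =
      ((fst z2 - fst c)^2 + (snd z2 - snd c)^2) - ((fst z2 - fst c')^2 + (snd z2 - snd c')^2)
      - (((fst z1 - fst c)^2 + (snd z1 - snd c)^2) - ((fst z1 - fst c')^2 + (snd z1 - snd c')^2)))
      by (unfold n1, n2; ring).
    rewrite C1, C2, D1, D2 in K. lra. }
  assert (P3 : (fst z3 - fst z1) * n1 + (snd z3 - snd z1) * n2 = 0).
  { assert (K : 2 * ((fst z3 - fst z1) * n1 + (snd z3 - snd z1) * n2) =
      ((fst z3 - fst c)^2 + (snd z3 - snd c)^2) - ((fst z3 - fst c')^2 + (snd z3 - snd c')^2)
      - (((fst z1 - fst c)^2 + (snd z1 - snd c)^2) - ((fst z1 - fst c')^2 + (snd z1 - snd c')^2)))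
      by (unfold n1, n2; ring).
    rewrite C1, C3, D1, D3 in K. lra. }
  set (N := n1^2 + n2^2) in *.
  apply (line_circle z1 z2 z3 c (r^2) (- n2) n1
    ((-(fst z2 - fst z1) * n2 + (snd z2 - snd z1) * n1) / N)
    ((-(fst z3 - fst z1) * n2 + (snd z3 - snd z1) * n1) / N)); auto;
    try (unfold N in *; replace ((- n2)^2 + n1^2) with (n1^2+n2^2) by ring; lra);
    try (destruct (perp_dec _ _ _ _ P2 Hn); unfold N; lra);
    try (destruct (perp_dec _ _ _ _ P3 Hn); unfold N; lra).
Qed.

Lemma circ_iso g g' c r t0 t1 t0' t1' s s' : 0 < r -> t0 < s < t1 -> t1 < t0 + 2 * PI ->
  t0' < s' < t1' -> cos s = cos s' -> sin s = sin s' ->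
  (forall z, arc_pts (Circ c r t0 t1) z -> g z) -> (forall z, arc_pts (Circ c r t0' t1') z -> g' z) ->
  proper_intersection g g' (arc_P (Circ c r t0 t1) s) -> False.
Proof.
  intros Hr Hs Ht Hs' Ec Es G G' [_ [_ [eps [He Hq]]]].
  assert (Hre : 0 < eps / (2 * r)) by (apply Rdiv_lt_0_compat; lra).
  destruct (pos3 (t1 - s) (t1' - s') (eps / (2 * r))) as [u [Hu [U1 [U2 U3]]]]; try lra.
  set (z := (fst c + r * cos (s + u), snd c + r * sin (s + u))).
  assert (Hz : z = arc_P (Circ c r t0 t1) s).
  { apply Hq.
    - apply G. simpl. exists (s + u). split; [lra|reflexivity].
    - apply G'. simpl. exists (s' + u). split; [lra|].
      unfold z. rewrite !cos_plus, !sin_plus, Ec, Es. reflexivity.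
    - apply dist_lt; auto. unfold z; cbn [arc_P fst snd].
      replace ((fst c + r * cos s - (fst c + r * cos (s + u))) ^ 2 +
               (snd c + r * sin s - (snd c + r * sin (s + u))) ^ 2)
        with (r^2 * ((sin s ^2 + cos s ^2) * (1 - 2 * cos u + (sin u ^2 + cos u ^2))))
        by (rewrite cos_plus, sin_plus; ring).
      rewrite !sin2c.
      replace u with (2 * (u / 2)) at 1 by field. rewrite cos_2a_sin.
      assert (S1 : 0 < sin (u / 2)) by (apply sin_gt_0; lra).
      assert (S2 : sin (u / 2) < u / 2) by (apply sin_lt_x; lra).
      assert (r * u <= eps / 2).
      { apply Rmult_le_compat_l with (r := r) in U3; [|lra].
        replace (r * (eps / (2 * r))) with (eps / 2) in U3 by (field; lra). lra. }
      assert (X1 : r * sin (u/2) < eps / 4) by nra.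
      assert (X0 : 0 < r * sin (u/2)) by nra.
      replace (r ^ 2 * (1 * (1 - 2 * (1 - 2 * sin (u / 2) * sin (u / 2)) + 1))) with (4 * (r * sin (u/2))^2) by ring.
      set (X := r * sin (u/2)) in *. nra. }
  unfold z in Hz; cbn [arc_P] in Hz. injection Hz; intros E2 E1.
  apply (circ_inj s (s + u)); try lra.
  - apply Rmult_eq_reg_l with r; lra.
  - apply Rmult_eq_reg_l with r; lra.
Qed.

Lemma seg_iso g g' P Q P' Q' t t' t2 t2' : P <> Q -> 0 < t < 1 -> 0 < t' < 1 ->
  arc_P (Seg P Q) t = arc_P (Seg P' Q') t' -> arc_P (Seg P Q) t2 = arc_P (Seg P' Q') t2' -> t <> t2 ->
  (forall z, arc_pts (Seg P Q) z -> g z) -> (forall z, arc_pts (Seg P' Q') z -> g' z) ->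
  proper_intersection g g' (arc_P (Seg P Q) t) -> False.
Proof.
  intros HPQ Ht Ht' Hp Hq Htt G G' [_ [_ [eps [He Hprop]]]].
  assert (HD := seg_nz P Q HPQ).
  destruct P as [P1 P2], Q as [Q1 Q2], P' as [R1 R2], Q' as [S1 S2]; cbn [arc_P fst snd] in *.
  injection Hp; intros Hp2 Hp1. injection Hq; intros Hq2 Hq1.
  assert (Htt2 : t - t2 <> 0) by lra.
  set (lam := (t' - t2') / (t - t2)).
  assert (E1 : Q1 - P1 = lam * (S1 - R1)).
  { unfold lam. apply Rmult_eq_reg_l with (t - t2); auto. field_simplify; auto. lra. }
  assert (E2 : Q2 - P2 = lam * (S2 - R2)).
  { unfold lam. apply Rmult_eq_reg_l with (t - t2); auto. field_simplify; auto. lra. }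
  set (D := (Q1 - P1)^2 + (Q2 - P2)^2) in *.
  assert (Hm : 0 < Rmin t' (1 - t') / (Rabs lam + 1)).
  { apply Rdiv_lt_0_compat. unfold Rmin; destruct Rle_dec; lra. pose proof (Rabs_pos lam); lra. }
  assert (He2 : 0 < eps / (2 * (D + 1))) by (apply Rdiv_lt_0_compat; lra).
  destruct (pos3 (1 - t) (Rmin t' (1 - t') / (Rabs lam + 1)) (eps / (2 * (D + 1)))) as [u [Hu [U1 [U2 U3]]]]; try lra.
  assert (L : Rabs (lam * u) <= Rmin t' (1 - t')).
  { rewrite Rabs_mult, (Rabs_right u) by lra.
    apply Rmult_le_compat_l with (r := Rabs lam + 1) in U2; [|pose proof (Rabs_pos lam); lra].
    replace ((Rabs lam + 1) * (Rmin t' (1 - t') / (Rabs lam + 1))) with (Rmin t' (1 - t')) in U2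
      by (field; pose proof (Rabs_pos lam); lra).
    nra. }
  assert (L2 : - Rmin t' (1 - t') <= lam * u <= Rmin t' (1 - t')).
  { revert L. unfold Rabs; destruct Rcase_abs; intros; lra. }
  assert (M1 : Rmin t' (1 - t') <= t') by (unfold Rmin; destruct Rle_dec; lra).
  assert (M2 : Rmin t' (1 - t') <= 1 - t') by (unfold Rmin; destruct Rle_dec; lra).
  assert (K1 : u * (Q1 - P1) = u * lam * (S1 - R1)) by (rewrite E1; ring).
  assert (K2 : u * (Q2 - P2) = u * lam * (S2 - R2)) by (rewrite E2; ring).
  assert (Hz : ((1 - (t + u)) * P1 + (t + u) * Q1, (1 - (t + u)) * P2 + (t + u) * Q2) =
               ((1 - t) * P1 + t * Q1, (1 - t) * P2 + t * Q2)).
  { apply Hprop.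
    - apply G. simpl. exists (t + u). split; [lra|reflexivity].
    - apply G'. simpl. exists (t' + lam * u). split; [lra|].
      f_equal; lra.
    - apply dist_lt; auto. cbn [fst snd].
      replace (((1 - t) * P1 + t * Q1 - ((1 - (t + u)) * P1 + (t + u) * Q1)) ^ 2 +
               ((1 - t) * P2 + t * Q2 - ((1 - (t + u)) * P2 + (t + u) * Q2)) ^ 2) with (u^2 * D)
        by (unfold D; ring).
      assert (u * (D + 1) <= eps / 2).
      { apply Rmult_le_compat_l with (r := D + 1) in U3; [|lra].
        replace ((D + 1) * (eps / (2 * (D + 1)))) with (eps / 2) in U3 by (field; lra). lra. }
      assert (0 < u * (D + 1)) by nra.
      assert ((u * (D + 1))^2 <= (eps/2)^2) by nra.
      assert (u^2 * D <= (u * (D + 1))^2) by nra.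
      nra. }
  assert (EE : (fst (1 - (t + u), 0) * 0 + 0 = 0)) by (simpl; ring). clear EE.
  assert (t + u = t).
  { apply (arc_P_inj (Seg (P1, P2) (Q1, Q2))); simpl; try lra; auto. }
  lra.
Qed.

Lemma interior a p : arc_pts a p -> p <> arc_src a -> p <> arc_tgt a ->
  exists t, arc_lo a < t < arc_hi a /\ p = arc_P a t.
Proof.
  intros H N1 N2. apply arc_pts_P in H as [t [Ht ->]].
  exists t; split; auto.
  destruct Ht as [[H1|H1] [H2|H2]]; try (split; auto; fail); subst.
  - exfalso; apply N2; rewrite arc_tgt_P; auto.
  - exfalso; apply N1; rewrite arc_src_P; auto.
  - exfalso; apply N1; rewrite arc_src_P; auto.
Qed.

Lemma pair_two g g' a a' p q r : arc_valid a -> arc_valid a' ->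
  (forall z, arc_pts a z -> g z) -> (forall z, arc_pts a' z -> g' z) ->
  arc_pts a p -> arc_pts a q -> arc_pts a r ->
  arc_pts a' p -> arc_pts a' q -> arc_pts a' r ->
  p <> q -> p <> r -> q <> r ->
  p <> arc_src a -> p <> arc_tgt a -> p <> arc_src a' -> p <> arc_tgt a' ->
  proper_intersection g g' p -> False.
Proof.
  intros Va Va' G G' Ap Aq Ar Bp Bq Br Npq Npr Nqr S1 T1 S2 T2 Hpr.
  destruct (interior a p Ap S1 T1) as [t [Ht Et]].
  destruct (interior a' p Bp S2 T2) as [t' [Ht' Et']].
  destruct a as [P Q|c rr t0 t1]; destruct a' as [P' Q'|c' rr' t0' t1'].
  - apply arc_pts_P in Aq as [t2 [_ E2]]. apply arc_pts_P in Bq as [t2' [_ E2']].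
    simpl in Ht, Ht'.
    apply (seg_iso g g' P Q P' Q' t t' t2 t2'); auto.
    + rewrite <- Et, <- Et'; auto.
    + rewrite <- E2, <- E2'; auto.
    + intros ->. apply Npq. congruence.
    + rewrite <- Et; auto.
  - apply (seg_circ P Q c' rr' t0' t1' p q r); auto.
  - apply (seg_circ P' Q' c rr t0 t1 p q r); auto.
  - destruct (point_eq_dec c c') as [Ec|Nc].
    + subst c'. simpl in Va, Va', Ht, Ht'.
      rewrite Et in Et'. cbn [arc_P] in Et'. injection Et'; intros E2 E1.
      assert (Ea : rr * cos t = rr' * cos t') by lra.
      assert (Eb : rr * sin t = rr' * sin t') by lra.
      assert (rr = rr').
      { assert (rr^2 * (sin t ^2 + cos t^2) = rr'^2 * (sin t' ^2 + cos t'^2)).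
        { replace (rr^2 * (sin t ^2 + cos t^2)) with ((rr * sin t)^2 + (rr * cos t)^2) by ring.
          rewrite Ea, Eb; ring. }
        rewrite !sin2c in H. nra. }
      subst rr'.
      apply (circ_iso g g' c rr t0 t1 t0' t1' t t'); try tauto.
      * apply Rmult_eq_reg_l with rr; lra.
      * apply Rmult_eq_reg_l with rr; lra.
      * rewrite <- Et; auto.
    + apply (circ_circ c rr t0 t1 c' rr' t0' t1' p q r); auto.
Qed.

Lemma count_keys (n : nat) (ps : list point) (key : point -> nat) : NoDup ps ->
  (forall p, In p ps -> (key p < n)%nat) ->
  (forall p q r, In p ps -> In q ps -> In r ps -> p <> q -> p <> r -> q <> r ->
     key p = key q -> key p = key r -> False) ->
  (length ps <= 2 * n)%nat.
Proof.
  revert ps. induction n as [|n IH]; intros ps Hnd Hk Hf.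
  - destruct ps as [|p ps]; simpl; auto. specialize (Hk p (or_introl eq_refl)). lia.
  - rewrite <- (filter_length (fun p => Nat.eqb (key p) n) ps).
    assert (HA : (length (filter (fun p => Nat.eqb (key p) n) ps) <= 2)%nat).
    { assert (NA := NoDup_filter (fun p => Nat.eqb (key p) n) Hnd).
      remember (filter (fun p => Nat.eqb (key p) n) ps) as A.
      destruct A as [|p [|q [|r A]]]; simpl; try lia. exfalso.
      assert (Hin : forall x, In x (p :: q :: r :: A) -> In x ps /\ key x = n).
      { intros x Hx. rewrite HeqA in Hx. apply filter_In in Hx as [H1 H2].
        apply Nat.eqb_eq in H2; auto. }
      destruct (Hin p) as [P1 P2]; [simpl; auto|].
      destruct (Hin q) as [Q1 Q2]; [simpl; auto|].
      destruct (Hin r) as [R1 R2]; [simpl; auto|].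
      inversion NA as [|? ? N1 NA1]; subst. inversion NA1 as [|? ? N2 NA2]; subst.
      apply (Hf p q r); auto; try congruence.
      - intros ->; apply N1; simpl; auto.
      - intros ->; apply N1; simpl; auto.
      - intros ->; apply N2; simpl; auto. }
    assert (HB : (length (filter (fun p => negb (Nat.eqb (key p) n)) ps) <= 2 * n)%nat).
    { apply IH.
      - apply NoDup_filter; auto.
      - intros p Hp. apply filter_In in Hp as [H1 H2]. specialize (Hk p H1).
        apply Bool.negb_true_iff, Nat.eqb_neq in H2. lia.
      - intros p q r Hp Hq Hr. apply filter_In in Hp as [Hp _]. apply filter_In in Hq as [Hq _].
        apply filter_In in Hr as [Hr _]. eapply Hf; eauto. }
    lia.
Qed.

Lemma in_endpoints a l : In a l -> In (arc_src a) (endpoints l) /\ In (arc_tgt a) (endpoints l).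
Proof.
  intros H. unfold endpoints. split; apply in_flat_map; exists a; split; simpl; auto.
Qed.

Lemma length_endpoints l : length (endpoints l) = (2 * length l)%nat.
Proof. induction l; simpl; auto. rewrite IHl. lia. Qed.

Definition NE v (E : list point) p := forall e, In e E -> inner v e <> inner v p.

Lemma strict_in v g l i x : circular_curve g l -> absc_inj v g -> (i < length l)%nat ->
  arc_pts (nth i l dummy_arc) x -> NE v (endpoints l) x ->
  lo_of v (nth i l dummy_arc) < inner v x < hi_of v (nth i l dummy_arc).
Proof.
  intros [_ [Hval [Hg _]]] Hi Hl Hx Hne.
  assert (Hin := nth_In l dummy_arc Hl).
  destruct (in_endpoints _ _ Hin) as [I1 I2].
  assert (B := between v g _ x Hi (Hval _ Hin) (fun z Hz => proj2 (Hg z) (ex_intro _ _ (conj Hin Hz))) Hx).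
  specialize (Hne _ I1) as N1. specialize (Hne _ I2) as N2.
  unfold lo_of, hi_of, Rmin, Rmax in *. destruct Rle_dec; lra.
Qed.

Lemma NE_app_l v E1 E2 p : NE v (E1 ++ E2) p -> NE v E1 p.
Proof. intros H e He; apply H, in_or_app; auto. Qed.
Lemma NE_app_r v E1 E2 p : NE v (E1 ++ E2) p -> NE v E2 p.
Proof. intros H e He; apply H, in_or_app; auto. Qed.

Lemma NE_not_end v E a p : NE v E p -> In (arc_src a) E -> In (arc_tgt a) E ->
  p <> arc_src a /\ p <> arc_tgt a.
Proof. intros H I1 I2; split; intros ->; [apply (H _ I1)|apply (H _ I2)]; auto. Qed.

Lemma sub_curve g l i : circular_curve g l -> (i < length l)%nat ->
  arc_valid (nth i l dummy_arc) /\ forall z, arc_pts (nth i l dummy_arc) z -> g z.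
Proof.
  intros [_ [Hval [Hg _]]] Hl. assert (Hin := nth_In l dummy_arc Hl). split; auto.
  intros z Hz. apply Hg. eauto.
Qed.

Lemma fiber_gen v g g' l l' k p q r jp jq jr :
  circular_curve g l -> circular_curve g' l' -> absc_inj v g -> absc_inj v g' ->
  (k < length l)%nat -> (jp < length l')%nat -> (jq < length l')%nat -> (jr < length l')%nat ->
  p <> q -> p <> r -> q <> r ->
  NE v (endpoints l ++ endpoints l') p -> NE v (endpoints l ++ endpoints l') q ->
  NE v (endpoints l ++ endpoints l') r ->
  arc_pts (nth k l dummy_arc) p -> arc_pts (nth k l dummy_arc) q -> arc_pts (nth k l dummy_arc) r ->
  arc_pts (nth jp l' dummy_arc) p -> arc_pts (nth jq l' dummy_arc) q -> arc_pts (nth jr l' dummy_arc) r ->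
  lo_of v (nth jp l' dummy_arc) <= lo_of v (nth k l dummy_arc) ->
  lo_of v (nth jq l' dummy_arc) <= lo_of v (nth k l dummy_arc) ->
  lo_of v (nth jr l' dummy_arc) <= lo_of v (nth k l dummy_arc) ->
  proper_intersection g g' p -> False.
Proof.
  intros Hc Hc' Hi Hi' Hk Hjp Hjq Hjr Npq Npr Nqr NEp NEq NEr Ap Aq Ar Bp Bq Br Lp Lq Lr Hpr.
  assert (Sp := strict_in v g l k p Hc Hi Hk Ap (NE_app_l _ _ _ _ NEp)).
  assert (Sq := strict_in v g l k q Hc Hi Hk Aq (NE_app_l _ _ _ _ NEq)).
  assert (Sr := strict_in v g l k r Hc Hi Hk Ar (NE_app_l _ _ _ _ NEr)).
  assert (Tp := strict_in v g' l' jp p Hc' Hi' Hjp Bp (NE_app_r _ _ _ _ NEp)).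
  assert (Tq := strict_in v g' l' jq q Hc' Hi' Hjq Bq (NE_app_r _ _ _ _ NEq)).
  assert (Tr := strict_in v g' l' jr r Hc' Hi' Hjr Br (NE_app_r _ _ _ _ NEr)).
  assert (jp = jq).
  { apply (same_partner v g' l' jp jq ((lo_of v (nth k l dummy_arc) + Rmin (inner v p) (inner v q)) / 2)); auto;
    unfold Rmin; destruct Rle_dec as [?|?%Rnot_le_lt]; lra. }
  assert (jp = jr).
  { apply (same_partner v g' l' jp jr ((lo_of v (nth k l dummy_arc) + Rmin (inner v p) (inner v r)) / 2)); auto;
    unfold Rmin; destruct Rle_dec as [?|?%Rnot_le_lt]; lra. }
  subst jq jr.
  destruct (sub_curve g l k Hc Hk) as [Va Ga].
  destruct (sub_curve g' l' jp Hc' Hjp) as [Va' Ga'].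
  destruct (in_endpoints _ l (nth_In l dummy_arc Hk)) as [I1 I2].
  destruct (in_endpoints _ l' (nth_In l' dummy_arc Hjp)) as [I3 I4].
  destruct (NE_not_end v _ _ p (NE_app_l _ _ _ _ NEp) I1 I2).
  destruct (NE_not_end v _ _ p (NE_app_r _ _ _ _ NEp) I3 I4).
  apply (pair_two g g' (nth k l dummy_arc) (nth jp l' dummy_arc) p q r); auto.
Qed.

Lemma proper_sym g g' p : proper_intersection g g' p -> proper_intersection g' g p.
Proof.
  intros [H1 [H2 [e [He H]]]]. repeat split; auto. exists e; split; auto.
Qed.

Lemma NE_swap v E1 E2 p : NE v (E1 ++ E2) p -> NE v (E2 ++ E1) p.
Proof. intros H e He; apply H. apply in_app_or in He; apply in_or_app; tauto. Qed.

Theorem mainTheorem12 :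
  exists C : nat,
    forall (gamma gamma' : pset) (l l' : list arc),
      circular_curve gamma l -> circular_curve gamma' l' ->
      mutually_monotone gamma gamma' ->
      forall ps : list point,
        NoDup ps ->
        (forall p, In p ps -> proper_intersection gamma gamma' p) ->
        (length ps <= C * (complexity l + complexity l'))%nat.
Proof.
  exists 6%nat.
  intros g g' l l' Hc Hc' [v [_ [Hm Hm']]] ps Hnd Hps.
  assert (Hi := mono_inj v g Hm). assert (Hi' := mono_inj v g' Hm').
  set (E := endpoints l ++ endpoints l').
  set (nl := length l). set (nl' := length l').
  set (R := fun p k =>
    if (k <? nl)%nat then
      (NE v E p /\ exists j, (j < nl')%nat /\ arc_pts (nth k l dummy_arc) p /\
         arc_pts (nth j l' dummy_arc) p /\
         lo_of v (nth j l' dummy_arc) <= lo_of v (nth k l dummy_arc))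
    else if (k <? nl + nl')%nat then
      (NE v E p /\ exists i, (i < nl)%nat /\ arc_pts (nth i l dummy_arc) p /\
         arc_pts (nth (k - nl) l' dummy_arc) p /\
         lo_of v (nth i l dummy_arc) <= lo_of v (nth (k - nl) l' dummy_arc))
    else inner v (nth (k - nl - nl') E (0,0)) = inner v p).
  set (N := (nl + nl' + length E)%nat).
  assert (Hex : forall p, exists k, In p ps -> (k < N)%nat /\ R p k).
  { intros p. destruct (classic (In p ps)) as [Hp|Hp]; [|exists 0%nat; tauto].
    destruct (Hps p Hp) as [Gp [Gp' _]].
    destruct (classic (exists e, In e E /\ inner v e = inner v p)) as [[e [He Ee]]|Hne].
    - destruct (In_nth E e (0,0) He) as [idx [Hidx Enth]].
      exists (nl + nl' + idx)%nat. intros _. split; [unfold N; lia|].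
      unfold R. replace (nl + nl' + idx <? nl)%nat with false by (symmetry; apply Nat.ltb_ge; lia).
      replace (nl + nl' + idx <? nl + nl')%nat with false by (symmetry; apply Nat.ltb_ge; lia).
      replace (nl + nl' + idx - nl - nl')%nat with idx by lia. congruence.
    - assert (NEp : NE v E p). { intros e He Ee. apply Hne; eauto. }
      destruct Hc as [_ [_ [Hg _]]]. destruct Hc' as [_ [_ [Hg' _]]].
      apply Hg in Gp as [a [Ha Pa]]. apply Hg' in Gp' as [a' [Ha' Pa']].
      destruct (In_nth l a dummy_arc Ha) as [i [Hil Ei]].
      destruct (In_nth l' a' dummy_arc Ha') as [j [Hjl Ej]].
      destruct (Rle_dec (lo_of v a') (lo_of v a)) as [Hle|Hlt].
      + exists i. intros _. split; [unfold N, nl; lia|].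
        unfold R. replace (i <? nl)%nat with true by (symmetry; apply Nat.ltb_lt; unfold nl; lia).
        split; auto. exists j. subst a a'. repeat split; auto.
      + exists (nl + j)%nat. intros _. split; [unfold N, nl'; lia|].
        unfold R. replace (nl + j <? nl)%nat with false by (symmetry; apply Nat.ltb_ge; lia).
        replace (nl + j <? nl + nl')%nat with true by (symmetry; apply Nat.ltb_lt; unfold nl'; lia).
        replace (nl + j - nl)%nat with j by lia.
        split; auto. exists i. subst a a'. repeat split; auto. lra. }
  set (key := fun p => proj1_sig (constructive_indefinite_description _ (Hex p))).
  assert (Hkey : forall p, In p ps -> (key p < N)%nat /\ R p (key p)).
  { intros p Hp. unfold key. destruct (constructive_indefinite_description _ (Hex p)) as [k Hk]; simpl; auto. }
  assert (HL : (length ps <= 2 * N)%nat).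
  { apply (count_keys N ps key Hnd); [intros p Hp; apply Hkey; auto|].
    intros p q r Hp Hq Hr Npq Npr Nqr K1 K2.
    destruct (Hkey p Hp) as [_ Rp]. destruct (Hkey q Hq) as [_ Rq]. destruct (Hkey r Hr) as [_ Rr].
    rewrite <- K1 in Rq. rewrite <- K2 in Rr.
    set (k := key p) in *. clearbody k.
    unfold R in Rp, Rq, Rr.
    destruct (k <? nl)%nat eqn:H1.
    - apply Nat.ltb_lt in H1.
      destruct Rp as [NEp [jp [Hjp [Ap [Bp Lp]]]]].
      destruct Rq as [NEq [jq [Hjq [Aq [Bq Lq]]]]].
      destruct Rr as [NEr [jr [Hjr [Ar [Br Lr]]]]].
      apply (fiber_gen v g g' l l' k p q r jp jq jr); auto.
    - destruct (k <? nl + nl')%nat eqn:H2.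
      + apply Nat.ltb_ge in H1. apply Nat.ltb_lt in H2.
        destruct Rp as [NEp [jp [Hjp [Ap [Bp Lp]]]]].
        destruct Rq as [NEq [jq [Hjq [Aq [Bq Lq]]]]].
        destruct Rr as [NEr [jr [Hjr [Ar [Br Lr]]]]].
        apply (fiber_gen v g' g l' l (k - nl) p q r jp jq jr); auto using NE_swap, proper_sym.
        unfold nl, nl' in *; lia.
      + destruct (Hps p Hp) as [Gp _]. destruct (Hps q Hq) as [Gq _].
        apply Npq. apply Hi; auto. congruence. }
  unfold N, E in HL. rewrite length_app, !length_endpoints in HL.
  unfold complexity. unfold nl, nl' in HL. lia.
Qed.
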